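(* Let $\{\mathbf Z_i(n), i\in\mathbb N\}$ be a critical GWBP/$\infty$ with mean matrix $\mathbf M\in\mathcal M_1$ and $\mathbf F(\mathbf s)\neq\mathbf M\mathbf s$. Then $$\lim_{z\uparrow1}\sup_{i\in\mathbb N}\frac{(1-z)\mathbb EZ_i-\mathbb E(1-z^{Z_i})}{(1-z)\mathbb EZ_i}=0$$ and $$\lim_{z\uparrow1}\sup_{i\in\mathbb N}\frac{(1-z)\mathbb EZ_i-\sum_{j\in\mathbb N}\mathbb E(1-z^{Z_{ij}})}{(1-z)\mathbb EZ_i}=0.$$
   Context: A GWBP/$\infty$ has types $\mathbb N=\{1,2,\dots\}$. Each particle lives one unit of time; a type-$i$ particle produces, independently of everything else, a random vector $\mathbf Z_i=(Z_{ij})_{j\in\mathbb N}$ of children ($Z_{ij}$ of type $j$), with $Z_i:=\sum_jZ_{ij}<\infty$ a.s. $\mathbf Z_i(n)=(Z_{ij}(n))_j$ is the generation-$n$ population vector starting from one type-$i$ particle. $F_i(\mathbf s)=\mathbb E\prod_js_j^{Z_{ij}}$ for $\mathbf s\in[0,1]^{\mathbb N}$; ''$\mathbf F(\mathbf s)\neq\mathbf M\mathbf s$'' means it is not true that $F_i(\mathbf s)=\sum_jM_{ij}s_j$ for all $i,\mathbf s$. Mean matrix $\mathbf M=(M_{ij})$, $M_{ij}=\mathbb EZ_{ij}$, $M^{(n)}_{ij}=\mathbb EZ_{ij}(n)$, $M_i=\sum_jM_{ij}=\mathbb EZ_i$. Irreducible: for all $i,j$ some $M^{(n)}_{ij}>0$;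 aperiodic: gcd of such $n$ is 1; then $\lim_n(M^{(n)}_{ij})^{1/n}=1/R$ for a common $R$; critical: $R=1$. $\mathbf M\in\mathcal M_1$ means: (i) irreducible, aperiodic, $R=1$, 1-recurrent ($\sum_nM^{(n)}_{ij}=\infty$) and 1-positive ($\lim_nM^{(n)}_{ij}>0$ for all $i,j$); then there are positive eigenvectors $\mathbf v\mathbf M=\mathbf v$, $\mathbf M\mathbf u^T=\mathbf u^T$, unique up to positive multiples, normalized with $\sum_jv_ju_j=1$; (ii) $\sum_jv_j=1$ and $\sup_iu_i<\infty$; (iii) $\lim_{N\to\infty}\sup_iM_i^{-1}\sum_{j>N}M_{ij}=0$ and $\lim_{K\to\infty}\sup_iM_i^{-1}\mathbb E[Z_i;Z_i>K]=0$. *)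

(* Defs.v *)
From mathcomp Require Import all_boot all_order all_algebra.
From mathcomp Require Import all_classical all_reals all_analysis.
Set Implicit Arguments. Unset Strict Implicit. Unset Printing Implicit Defensive.
Import Order.TTheory GRing.Theory Num.Theory.
Import numFieldNormedType.Exports.
Local Open Scope classical_set_scope.
Local Open Scope ring_scope.

(* Types are indexed by nat = {0,1,2,...} (type k+1 of the paper is k here).
   An offspring vector (Z_ij)_j with finitely many nonzero entries (Z_i < oo a.s.)
   is represented by a finite list v : seq nat with Z_ij = nth 0 v j.
   The offspring law of a type-i particle is a discrete probability
   [p i : seq nat -> R] (nonnegative, total mass 1). *)

Section GWBP.
Variable R : realType.
Variable p : nat -> seq nat -> R.

Definition is_offspring_law : Prop :=
  (forall i v, 0 <= p i v) /\
  (forall i, (\esum_(v in [set: seq nat]) (p i v)%:E = 1)%E).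

(* E f(Z_i), for f >= 0 (as an extended real) *)
Definition expect (i : nat) (f : seq nat -> R) : \bar R :=
  \esum_(v in [set: seq nat]) (p i v * f v)%:E.

Definition Zij (v : seq nat) (j : nat) : nat := nth 0%N v j.
Definition Ztot (v : seq nat) : nat := sumn v.

Definition Mext (i j : nat) : \bar R := expect i (fun v => (Zij v j)%:R).
Definition Miext (i : nat) : \bar R := expect i (fun v => (Ztot v)%:R).
Definition M (i j : nat) : R := fine (Mext i j).
Definition Mi (i : nat) : R := fine (Miext i).

(* M^(n)_ij = E Z_ij(n) = (M^n)_ij, computed in the extended nonnegative reals *)
Fixpoint Mpow (n : nat) (i j : nat) : \bar R :=
  match n with
  | 0%N => (if i == j then 1 else 0)%E
  | n'.+1 => (\sum_(0 <= k <oo) (Mpow n' i k * (M k j)%:E))%E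
  end.

Definition F (i : nat) (s : nat -> R) : \bar R :=
  expect i (fun v => \prod_(j < size v) s j ^+ Zij v j).

Definition F_linear : Prop :=
  forall i (s : nat -> R), (forall j, 0 <= s j <= 1) ->
    F i s = (\sum_(0 <= j <oo) (M i j * s j)%:E)%E.

Definition irreducible : Prop :=
  forall i j, exists n, (0 < Mpow n.+1 i j)%E.

Definition aperiodic : Prop :=
  forall i d, (1 < d)%N ->
    exists n, (0 < n)%N /\ (0 < Mpow n i i)%E /\ ~~ (d %| n)%N.

(* convergence parameter R = 1:  lim_n (M^(n)_ij)^(1/n) = 1 (all M^(n)_ij finite) *)
Definition critical : Prop :=
  (forall n i j, (Mpow n i j < +oo)%E) /\
  forall i j, (fun n : nat => fine (Mpow n.+1 i j) `^ (n.+1%:R)^-1) @ \oo --> (1 : R).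

Definition one_recurrent : Prop :=
  forall i j, (\sum_(0 <= n <oo) Mpow n i j)%E = +oo%E.

Definition one_positive : Prop :=
  forall i j, exists l : R, 0 < l /\ (fun n => fine (Mpow n i j)) @ \oo --> l.

Definition in_M1 : Prop :=
  (* means E Z_i are finite (M_i^{-1} below is a genuine real inverse) *)
  (forall i, (Miext i < +oo)%E) /\
  irreducible /\ aperiodic /\ critical /\ one_recurrent /\ one_positive /\
  (exists v u : nat -> R,
      (forall j, 0 < v j) /\ (forall i, 0 < u i) /\
      (forall j, (\sum_(0 <= k <oo) (v k * M k j)%:E)%E = (v j)%:E) /\
      (forall i, (\sum_(0 <= k <oo) (M i k * u k)%:E)%E = (u i)%:E) /\
      (\sum_(0 <= j <oo) (v j * u j)%:E)%E = 1%E /\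
      (\sum_(0 <= j <oo) (v j)%:E)%E = 1%E /\
      (exists B : R, forall i, u i <= B)) /\
  ((fun N : nat => ereal_sup [set ((Mi i)^-1%:E * \sum_(N <= j <oo) (M i j)%:E)%E
                              | i in [set: nat]]) @ \oo --> 0%E) /\
  ((fun K : nat => ereal_sup [set ((Mi i)^-1%:E *
          expect i (fun v => if (K < Ztot v)%N then (Ztot v)%:R else 0)%R)%E
                              | i in [set: nat]]) @ \oo --> 0%E).

Definition ratio1 (z : R) (i : nat) : R :=
  ((1 - z) * Mi i - fine (expect i (fun v => 1 - z ^+ Ztot v))) / ((1 - z) * Mi i).

Definition ratio2 (z : R) (i : nat) : R :=
  ((1 - z) * Mi i -
     fine (\sum_(0 <= j <oo) expect i (fun v => (1 - z ^+ Zij v j)%R))%E)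
  / ((1 - z) * Mi i).

End GWBP.

(* Main.v *)
Require Import Defs.
From mathcomp Require Import all_boot all_order all_algebra.
From mathcomp Require Import all_classical all_reals all_analysis.
From mathcomp Require Import ring lra.
Import Order.TTheory GRing.Theory Num.Theory.
Import numFieldNormedType.Exports.
Local Open Scope classical_set_scope.
Local Open Scope ring_scope.

Lemma L3 (R : realType) (z : R) k : 0 <= z <= 1 -> 0 <= 1 - z ^+ k.
Proof. by case/andP=> z0 z1; rewrite subr_ge0 exprn_ile1. Qed.

Lemma L1 (R : realType) (z : R) k : 0 <= z <= 1 -> 1 - z ^+ k <= k%:R * (1 - z).
Proof.
move=> /[dup] hz /andP[z0 z1]; elim: k => [|k IH]; first by rewrite expr0 subrr mul0r.
have zk : 0 <= z ^+ k <= 1 by rewrite exprn_ge0 // exprn_ile1.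
rewrite exprS -natr1 mulrDl mul1r.
have -> : 1 - z * z ^+ k = (1 - z ^+ k) + z ^+ k * (1 - z) by ring.
apply: lerD => //. case/andP: zk => a b. rewrite -[X in _ <= X]mul1r ler_wpM2r //.
by rewrite subr_ge0.
Qed.

Lemma L2 (R : realType) (z : R) k : 0 <= z <= 1 ->
  (1 - z) * k%:R * z ^+ k <= 1 - z ^+ k.
Proof.
move=> /[dup] hz /andP[z0 z1]; elim: k => [|k IH]; first by rewrite !mulr0 mul0r expr0 subrr.
have zk : 0 <= z ^+ k <= 1 by rewrite exprn_ge0 // exprn_ile1.
case/andP: zk => a b.
have -> : 1 - z ^+ k.+1 = (1 - z ^+ k) + z ^+ k * (1 - z) by rewrite exprS; ring.
have h1 : (1 - z) * k.+1%:R * z ^+ k.+1 <= (1 - z) * k.+1%:R * z ^+ k.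
  apply: ler_wpM2l; first by apply: mulr_ge0; rewrite ?subr_ge0.
  by rewrite exprS -[X in _ <= X]mul1r ler_wpM2r.
apply: (le_trans h1). rewrite -natr1 mulrDr mulr1 mulrDl.
by apply: lerD => //; rewrite mulrC.
Qed.

Lemma L6 (R : realType) (z : R) K k : 0 <= z <= 1 ->
  (1 - z) * z ^+ K * k%:R <= (1 - z ^+ k) + (1 - z) * (if (K < k)%N then k%:R else 0).
Proof.
move=> /[dup] hz /andP[z0 z1].
have z1' : 0 <= 1 - z by rewrite subr_ge0.
case: ltnP => hK.
  rewrite -[X in X <= _]add0r; apply: lerD; first exact: L3.
  rewrite -mulrA ler_wpM2l // -[X in _ <= X]mul1r ler_wpM2r // exprn_ile1 //.
rewrite mulr0 addr0; apply: le_trans (@L2 _ z k hz).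
rewrite -mulrA [z ^+ K * _]mulrC mulrA; apply: ler_wpM2l.
  by apply: mulr_ge0.
by rewrite -(subnK hK) exprD -[X in _ <= X]mul1r ler_wpM2r ?exprn_ge0 // exprn_ile1.
Qed.

Lemma L4 (R : realType) (z : R) (v : seq nat) n : 0 <= z <= 1 -> (size v <= n)%N ->
  1 - z ^+ (sumn v) <= \sum_(j < n) (1 - z ^+ (nth 0%N v j)).
Proof.
move=> hz; elim: v n => [|a v IH] n /=.
  by move=> _; rewrite expr0 subrr sumr_ge0 // => j _; rewrite nth_nil expr0 subrr.
case: n => // n; rewrite ltnS => hn.
rewrite big_ord_recl /=.
have -> : 1 - z ^+ (a + sumn v) = (1 - z ^+ a) + z ^+ a * (1 - z ^+ sumn v) by rewrite exprD; ring.
apply: lerD => //.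
apply: le_trans (IH _ hn).
case/andP: hz => z0 z1.
rewrite -[X in _ <= X]mul1r; apply: ler_wpM2r; [by rewrite subr_ge0 exprn_ile1 | exact: exprn_ile1].
Qed.

Lemma L5 (R : realType) (z : R) (v : seq nat) n : 0 <= z <= 1 ->
  \sum_(j < n) (1 - z ^+ (nth 0%N v j)) <= (1 - z) * (sumn v)%:R.
Proof.
move=> /[dup] hz /andP[z0 z1]; have z1' : 0 <= 1 - z by rewrite subr_ge0.
elim: v n => [|a v IH] n /=.
  by rewrite mulr0 big1 // => j _; rewrite nth_nil expr0 subrr.
case: n => [|n]; first by rewrite big_ord0 mulr_ge0.
rewrite big_ord_recl /= natrD mulrDr; apply: lerD; last exact: IH.
by rewrite mulrC; exact: L1.
Qed.

Lemma esumZ (R : realType) (T : choiceType) (S : set T) (a : T -> \bar R) (r : R) :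
  0 <= r -> (forall x, (0 <= a x)%E) ->
  esum S (fun x => (r%:E * a x)%E) = (r%:E * esum S a)%E.
Proof.
move=> r0 a0; rewrite /esum -ereal_supZl //; last first.
  by apply/set0P; exists (\sum_(x \in set0) a x)%E; exists set0 => //; exact: fsets_set0.
congr ereal_sup; apply/seteqP; split=> x /=.
  case=> A fA <-; exists (\sum_(x \in A) a x)%E; first by exists A.
  by rewrite ge0_mule_fsumr.
by case=> _ [A fA <-] <-; exists A => //; rewrite ge0_mule_fsumr.
Qed.

Lemma expect_ge0 (R : realType) (p : nat -> seq nat -> R) i f :
  (forall i v, 0 <= p i v) -> (forall v, 0 <= f v) -> (0 <= expect p i f)%E.
Proof. by move=> hp hf; apply: esum_ge0 => v _; rewrite lee_fin mulr_ge0. Qed.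

Lemma le_expect (R : realType) (p : nat -> seq nat -> R) i f g :
  (forall i v, 0 <= p i v) -> (forall v, f v <= g v) -> (expect p i f <= expect p i g)%E.
Proof. by move=> hp hf; apply: le_esum => v _; rewrite lee_fin ler_wpM2l. Qed.

Lemma expectZ (R : realType) (p : nat -> seq nat -> R) i f c :
  (forall i v, 0 <= p i v) -> (forall v, 0 <= f v) -> 0 <= c ->
  expect p i (fun v => c * f v) = (c%:E * expect p i f)%E.
Proof.
move=> hp hf c0; rewrite /expect -esumZ //; last by move=> v; rewrite lee_fin mulr_ge0.
by apply: eq_esum => v _; rewrite -EFinM mulrCA.
Qed.

Lemma expectD (R : realType) (p : nat -> seq nat -> R) i f g :
  (forall i v, 0 <= p i v) -> (forall v, 0 <= f v) -> (forall v, 0 <= g v) ->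
  expect p i (fun v => f v + g v) = (expect p i f + expect p i g)%E.
Proof.
move=> hp hf hg; rewrite /expect -esumD; last 2 first.
- by move=> v _; rewrite lee_fin mulr_ge0.
- by move=> v _; rewrite lee_fin mulr_ge0.
by apply: eq_esum => v _; rewrite mulrDr EFinD.
Qed.

Lemma S_upper (R : realType) (p : nat -> seq nat -> R) i (z : R) :
  (forall i v, 0 <= p i v) -> 0 <= z <= 1 ->
  ((\sum_(0 <= j <oo) expect p i (fun v => (1 - z ^+ Zij v j)%R)) <=
    expect p i (fun v => ((1 - z) * (Ztot v)%:R)%R))%E.
Proof.
move=> hp hz.
have h0 : forall j, (0 <= expect p i (fun v => (1 - z ^+ Zij v j)%R))%E.
  by move=> j; apply: expect_ge0 => // v; exact: L3.
apply: lime_le; first exact: is_cvg_nneseries.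
apply: nearW => n.
rewrite /expect -esum_sum; last by move=> v j _ _; rewrite lee_fin mulr_ge0 // L3.
apply: le_esum => v _; rewrite sumEFin lee_fin -mulr_sumr ler_wpM2l //.
by rewrite big_mkord; exact: L5.
Qed.

Lemma S_lower (R : realType) (p : nat -> seq nat -> R) i (z : R) :
  (forall i v, 0 <= p i v) -> 0 <= z <= 1 ->
  (expect p i (fun v => (1 - z ^+ Ztot v)%R) <=
   \sum_(0 <= j <oo) expect p i (fun v => (1 - z ^+ Zij v j)%R))%E.
Proof.
move=> hp hz.
have h0 : forall j, (0 <= expect p i (fun v => (1 - z ^+ Zij v j)%R))%E.
  by move=> j; apply: expect_ge0 => // v; exact: L3.
rewrite {1}/expect /esum; apply: ge_ereal_sup => _ [X [finX _] <-].
pose n := (\max_(v <- finmap.enum_fset (fset_set X)) size v)%N.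
apply: le_trans (nneseries_lim_ge n (fun k _ _ => h0 k)).
rewrite /expect -esum_sum; last by move=> v j _ _; rewrite lee_fin mulr_ge0 // L3.
apply: esum_ge; exists X; first by split.
apply: lee_fsum => // v Xv; rewrite sumEFin lee_fin -mulr_sumr ler_wpM2l //.
rewrite big_mkord; apply: L4 => //.
by apply: (@leq_bigmax_seq _ _ xpredT) => //; rewrite in_fset_set // inE.
Qed.

Lemma arith (R : realType) (z m x w t a K e1 : R) : z < 1 -> 0 < m ->
  x <= w -> w <= (1 - z) * m -> (1 - z) * a * m <= x + (1 - z) * t ->
  1 - a <= K * (1 - z) -> t <= e1 * m ->
  0 <= ((1 - z) * m - w) / ((1 - z) * m) <= K * (1 - z) + e1.
Proof.
move=> z1 m0 xw wb hl ha ht.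
have d0 : 0 < (1 - z) * m by rewrite mulr_gt0 // subr_gt0.
apply/andP; split; first by rewrite divr_ge0 ?subr_ge0 // ltW.
rewrite ler_pdivrMr //.
have hA : (1 - z) * m * (1 - a) <= (1 - z) * m * (K * (1 - z)) by rewrite ler_wpM2l // ltW.
have hB : (1 - z) * t <= (1 - z) * (e1 * m) by rewrite ler_wpM2l // subr_ge0 ltW.
nra.
Qed.

Lemma finE (R : realType) (x : \bar R) (y : R) : (0 <= x)%E -> (x <= y%:E)%E -> x = (fine x)%:E.
Proof. by move=> x0 xy; rewrite fineK // ge0_fin_numE // (le_lt_trans xy) ?ltry. Qed.

Definition tailf (R : realType) (K : nat) (v : seq nat) : R :=
  if (K < Ztot v)%N then (Ztot v)%:R else 0.

Lemma bound_i (R : realType) (p : nat -> seq nat -> R) i (z : R) K (e1 : R) :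
  (forall i v, 0 <= p i v) -> (Miext p i < +oo)%E -> 0 <= z -> z < 1 -> 0 <= e1 ->
  ((Mi p i)^-1%:E * expect p i (@tailf R K) <= e1%:E)%E ->
  (0 <= ratio1 p z i <= K%:R * (1 - z) + e1) /\ (0 <= ratio2 p z i <= K%:R * (1 - z) + e1).
Proof.
move=> hp hMf z0 z1 e0 ht.
have hz : 0 <= z <= 1 by rewrite z0 ltW.
have z1' : 0 <= 1 - z by rewrite subr_ge0 ltW.
have M0 : (0 <= Miext p i)%E by apply: expect_ge0 => // v.
have Me : Miext p i = (Mi p i)%:E by rewrite /Mi fineK // ge0_fin_numE.
have m0 : 0 <= Mi p i by rewrite /Mi fine_ge0.
have bnd : 0 <= K%:R * (1 - z) + e1 by rewrite addr_ge0 // mulr_ge0.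
rewrite /ratio1 /ratio2.
case: (eqVneq (Mi p i) 0) => [->|mn0].
  by rewrite !mulr0 invr0 !mulr0 lexx bnd.
have mp : 0 < Mi p i by rewrite lt0r mn0.
set m := Mi p i in Me mp ht *.
set A := expect p i (fun v => (1 - z ^+ Ztot v)%R).
set S := (\sum_(0 <= j <oo) expect p i (fun v => (1 - z ^+ Zij v j)%R))%E.
have A0 : (0 <= A)%E by apply: expect_ge0 => // v; exact: L3.
have EZ : expect p i (fun v => ((1 - z) * (Ztot v)%:R)%R) = ((1 - z) * m)%:E.
  by rewrite expectZ // -/(Miext p i) Me.
have Aup : (A <= ((1 - z) * m)%:E)%E.
  rewrite -EZ; apply: le_expect => // v; rewrite mulrC; exact: L1.
have Sup : (S <= ((1 - z) * m)%:E)%E by rewrite -EZ; exact: S_upper.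
have AS : (A <= S)%E by exact: S_lower.
have T0 : (0 <= expect p i (@tailf R K))%E by apply: expect_ge0 => // v; rewrite /tailf; case: ifP.
have Tup : (expect p i (@tailf R K) <= m%:E)%E.
  by rewrite -Me; apply: le_expect => // v; rewrite /tailf; case: ifP.
have Te := @finE R _ _ T0 Tup; set t := fine (expect p i (@tailf R K)) in Te.
have ht' : t <= e1 * m.
  by move: ht; rewrite Te -EFinM lee_fin ler_pdivrMl // mulrC.
have Alow : (((1 - z) * z ^+ K * m)%:E <= A + ((1 - z) * t)%:E)%E.
  rewrite EFinM -Me /Miext -expectZ //; last by rewrite mulr_ge0 // exprn_ge0.
  rewrite EFinM -Te -expectZ //; last by move=> v; rewrite /tailf; case: ifP.
  rewrite /A -expectD //; last first.
  - by move=> v; rewrite /tailf; case: ifP => _; rewrite ?mulr0 // mulr_ge0.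
  - by move=> v; exact: L3.
  by apply: le_expect => // v; exact: L6.
have Ae := @finE R _ _ A0 Aup; set x := fine A in Ae.
have S0 : (0 <= S)%E by exact: le_trans AS.
have Se := @finE R _ _ S0 Sup; set y := fine S in Se.
have ha : 1 - z ^+ K <= K%:R * (1 - z) by exact: L1.
move: Aup Sup AS Alow; rewrite Ae Se -EFinD !lee_fin => Aup Sup AS Alow.
rewrite /=; split.
  by apply: (@arith R z m x x t (z ^+ K) K%:R e1).
by apply: (@arith R z m x y t (z ^+ K) K%:R e1).
Qed.

Lemma supbnd (R : realType) (g : nat -> R) (e : R) : (forall i, 0 <= g i <= e) ->
  (0 <= ereal_sup [set (g i)%:E | i in [set: nat]] <= e%:E)%E.
Proof.
move=> H; apply/andP; split.
  apply: le_trans (_ : ((g 0%N)%:E <= _)%E); first by rewrite lee_fin; case/andP: (H 0%N).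
  by apply: ereal_sup_ubound; exists 0%N.
by apply: ge_ereal_sup => _ [i _ <-]; rewrite lee_fin; case/andP: (H i).
Qed.

Lemma sup_cvg0 (R : realType) (g : R -> nat -> R) :
  (forall e, 0 < e -> \forall z \near 1^'-, forall i, 0 <= g z i <= e) ->
  (fun z => ereal_sup [set (g z i)%:E | i in [set: nat]]) @ 1^'- --> 0%E.
Proof.
move=> H; apply/fine_cvgP; split.
  apply: filterS (H 1 ltr01) => z /supbnd /andP[h0 h1].
  by rewrite ge0_fin_numE // (le_lt_trans h1) ?ltry.
apply/cvgrPdist_le => e e0; apply: filterS (H e e0) => z /supbnd /andP[h0 h1].
have E := @finE R _ _ h0 h1; rewrite E lee_fin in h0 h1.
by rewrite /= E /= sub0r normrN ger0_norm.
Qed.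

Lemma tail_ex (R : realType) (p : nat -> seq nat -> R) :
  ((fun K : nat => ereal_sup [set ((Mi p i)^-1%:E *
          expect p i (fun v => if (K < Ztot v)%N then (Ztot v)%:R else 0)%R)%E
                              | i in [set: nat]]) @ \oo --> 0%E) ->
  forall e, 0 < e -> exists K, forall i,
    ((Mi p i)^-1%:E * expect p i (@tailf R K) <= e%:E)%E.
Proof.
move=> /fine_cvgP [hfin /cvgrPdist_le hc] e e0.
near \oo => K.
have hf : ereal_sup [set ((Mi p j)^-1%:E * expect p j (@tailf R K))%E | j in [set: nat]]
   \is a fin_num by near: K; exact: hfin.
have he : `|0 - fine (ereal_sup [set ((Mi p j)^-1%:E * expect p j (@tailf R K))%E | j in [set: nat]])| <= e.
  by near: K; exact: hc.
exists K => i.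
set s := ereal_sup _ in hf he *.
apply: le_trans (_ : (_ <= s)%E) _; first by apply: ereal_sup_ubound; exists i.
rewrite -(fineK hf) lee_fin; apply: le_trans (ler_norm _) _.
by rewrite -normrN -sub0r.
Unshelve. all: end_near.
Qed.

Theorem theorem3 (R : realType) (p : nat -> seq nat -> R) :
  is_offspring_law p -> in_M1 p -> ~ F_linear p ->
  ((fun z : R => ereal_sup [set (ratio1 p z i)%:E | i in [set: nat]])
     @ 1^'- --> 0%E) /\
  ((fun z : R => ereal_sup [set (ratio2 p z i)%:E | i in [set: nat]])
     @ 1^'- --> 0%E).
Proof.
move=> [hp _] [hMf [_ [_ [_ [_ [_ [_ [_ htail]]]]]]]] _.
have key : forall e, 0 < e -> \forall z \near 1^'-, forall i,
    (0 <= ratio1 p z i <= e) /\ (0 <= ratio2 p z i <= e).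
  move=> e e0.
  have e20 : 0 < e / 2 by rewrite divr_gt0.
  have [K hK] := @tail_ex R p htail _ e20.
  have d0 : 0 < e / 2 / (K%:R + 1) by rewrite divr_gt0 // ltr_wpDl.
  near=> z => i.
  have z0 : 0 < z by near: z; apply: nbhs_left_gt; exact: ltr01.
  have z1 : z < 1 by near: z; exact: nbhs_left_lt.
  have zd : 1 - z < e / 2 / (K%:R + 1) by near: z; exact: nbhs_left_ltBl.
  have [h1 h2] := @bound_i R p i z K (e / 2) hp (hMf i) (ltW z0) z1 (ltW e20) (hK i).
  have hb : K%:R * (1 - z) + e / 2 <= e.
    rewrite ltr_pdivlMr ?ltr_wpDl // in zd.
    have K0 : 0 <= K%:R :> R by [].
    have : K%:R * (1 - z) <= e / 2 by nra.
    move=> h; rewrite [X in _ <= X](splitr e); lra.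
  case/andP: h1 => a1 b1; case/andP: h2 => a2 b2.
  by rewrite a1 a2 (le_trans b1 hb) (le_trans b2 hb).
split; apply: sup_cvg0 => e e0; apply: filterS (key e e0) => z H i; by case: (H i).
Unshelve. all: end_near.
Qed.
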